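(* Assume the standing assumptions and let $\bar u\in V$ be a local solution of \[ \min_{u\in V}\ F(u)+\frac\alpha2\|u\|_V^2+\beta\int_\Omega|u|^p\,dx , \] i.e. there is $\rho>0$ such that the objective at $\bar u$ is not larger than at any $u$ with $\|u-\bar u\|_V\le\rho$. Then there exists $\bar\lambda\in V^*$ such that \[ \alpha\langle\bar u,v\rangle_V+\beta\langle\bar\lambda,v\rangle_{V^*,V}=-F'(\bar u)v\quad\forall v\in V, \qquad \langle\bar\lambda,\bar u\rangle_{V^*,V}=p\int_\Omega|\bar u|^p\,dx . \]
   Context: Standing assumptions: $\Omega\subset\mathbb R^d$ bounded Lipschitz domain; $V$ real Hilbert space with inner product $\langle\cdot,\cdot\rangle_V$, $V\subset L^2(\Omega)$ with compact and dense embedding; $V^*$ dual with pairing $\langle\cdot,\cdot\rangle_{V^*,V}$. $F:V\to\mathbb R$ weakly lower semicontinuous, bounded below by an affine function ($F(u)\ge\langle g,u\rangle_{V^*,V}+c$ for some $g\in V^*$, $c\in\mathbb R$), and continuously Fréchet differentiable with derivative $F'(u)\in V^*$. $\alpha>0$, $\beta>0$, $p\in(0,1)$. *)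

(* Defs.v *)
From HB Require Import structures.
From mathcomp Require Import all_boot all_order all_algebra.
From mathcomp Require Import all_classical all_reals all_analysis.
Set Implicit Arguments. Unset Strict Implicit. Unset Printing Implicit Defensive.
Import Order.TTheory GRing.Theory Num.Theory.
Import numFieldNormedType.Exports.
Local Open Scope classical_set_scope.
Local Open Scope ring_scope.

Definition Borel (R : realType) (d : nat) :=
  g_sigma_algebraType (@open 'rV[R]_d).

(* The d-dimensional Lebesgue measure (on Borel sets): the measure
   giving every closed box its volume.  This determines it uniquely. *)
Definition is_lebesgue_measure (R : realType) (d : nat)
    (leb : {measure set (Borel R d) -> \bar R}) : Prop :=
  forall a b : 'rV[R]_d, (forall i, a ord0 i <= b ord0 i) ->
    leb [set x : Borel R d | forall i, a ord0 i <= x ord0 i <= b ord0 i]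
    = (\prod_(i < d) (b ord0 i - a ord0 i))%:E.

(* Bounded Lipschitz domain: a bounded open set whose boundary is locally
   (after an orthogonal change of coordinates) the graph of a Lipschitz
   function, with the set lying on one side (below the graph). *)
Definition lipschitz_fun (R : realType) (d : nat) (g : 'rV[R]_d -> R) : Prop :=
  exists L : R, forall y z, `|g y - g z| <= L * `|y - z|.

Definition zero_coord (R : realType) (d : nat) (j : 'I_d) (z : 'rV[R]_d) :
  'rV[R]_d := \row_k (if k == j then 0 else z ord0 k).

Definition bounded_lipschitz_domain (R : realType) (d : nat)
    (Om : set 'rV[R]_d) : Prop :=
  [/\ open Om,
      (exists M : R, forall x, Om x -> `|x| <= M) &
      forall x, closure Om x -> ~ Om x ->
        exists (U : set 'rV[R]_d) (Q : 'M[R]_d) (j : 'I_d) (g : 'rV[R]_d -> R),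
          [/\ open U /\ U x, Q *m Q^T = 1%:M, lipschitz_fun g,
              (forall z, g z = g (zero_coord j z)) &
              Om `&` U = [set y | U y /\ ((y - x) *m Q) ord0 j < g ((y - x) *m Q)]]].

Definition L2_on (R : realType) (d : nat) (leb : {measure set (Borel R d) -> \bar R})
    (Om : set 'rV[R]_d) (f : 'rV[R]_d -> R) : Prop :=
  measurable_fun (Om : set (Borel R d)) (f : Borel R d -> R) /\
  (\int[leb]_(x in (Om : set (Borel R d))) ((f x) ^+ 2)%:E < +oo)%E.

Definition L2_dist2 (R : realType) (d : nat) (leb : {measure set (Borel R d) -> \bar R})
    (Om : set 'rV[R]_d) (f g : 'rV[R]_d -> R) : \bar R :=
  (\int[leb]_(x in (Om : set (Borel R d))) ((f x - g x) ^+ 2)%:E)%E.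

Definition inner_product_of (R : realType) (V : normedModType R)
    (ip : V -> V -> R) : Prop :=
  [/\ forall (a : R) (u v w : V), ip (a *: u + v) w = a * ip u w + ip v w,
      forall u v, ip u v = ip v u &
      forall u, ip u u = `|u| ^+ 2].

Definition in_dual (R : realType) (V : normedModType R) (l : V -> R) : Prop :=
  (forall (a : R) (u v : V), l (a *: u + v) = a * l u + l v) /\ continuous l.

Definition weak_cvg (R : realType) (V : normedModType R) (u_ : nat -> V) (u : V) :
  Prop := forall l : V -> R, in_dual l -> (fun n => l (u_ n)) @ \oo --> l u.

Definition weakly_lsc (R : realType) (V : normedModType R) (F : V -> R) : Prop :=
  forall (u_ : nat -> V) (u : V), weak_cvg u_ u ->
    ((F u)%:E <= limn_einf (fun n => (F (u_ n))%:E))%E.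

(* F is continuously Frechet differentiable: differentiable everywhere and
   u |-> F'(u) continuous from V to V^* (operator norm). *)
Definition C1_frechet (R : realType) (V : normedModType R) (F : V -> R) : Prop :=
  (forall u : V, differentiable F u) /\
  forall (u : V) (eps : R), 0 < eps -> exists2 delta : R, 0 < delta &
    forall w : V, `|w - u| < delta ->
      forall v : V, `|'d F w v - 'd F u v| <= eps * `|v|.

(* Main.v *)
Require Import Defs.
From HB Require Import structures.
From mathcomp Require Import all_boot all_order all_algebra.
From mathcomp Require Import all_classical all_reals all_analysis.
Import Order.TTheory GRing.Theory Num.Theory.
Import numFieldNormedType.Exports.
From mathcomp Require Import lra ring measurable_realfun.
Local Open Scope classical_set_scope.
Local Open Scope ring_scope.


Lemma coord_le_norm (R : realType) (d : nat) (x : 'rV[R]_d) i :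
  `|x ord0 i| <= `|x|.
Proof.
change (`|x ord0 i| <= mx_norm x); rewrite mx_normE.
rewrite -[leLHS]nngE num_le; exact: (le_bigmax _ _ (ord0, i)).
Qed.

Lemma Om_meas (R : realType) (d : nat) (Om : set 'rV[R]_d) :
  open Om -> measurable (Om : set (Borel R d)).
Proof. by move=> oOm; apply: sub_sigma_algebra. Qed.

Lemma Om_fin (R : realType) (d : nat)
  (leb : {measure set (Borel R d) -> \bar R}) (hleb : is_lebesgue_measure leb)
  (Om : set 'rV[R]_d) (hOm : bounded_lipschitz_domain Om) :
  (leb (Om : set (Borel R d)) < +oo)%E.
Proof.
case: hOm => oOm [M hM] _.
pose N : R := `|M|.
have hN : forall x, Om x -> forall i, - N <= x ord0 i <= N.
  move=> x /hM xM i; rewrite -ler_norml.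
  have h1 := @coord_le_norm _ _ x i; have h2 := ler_norm M; rewrite /N; apply: (le_trans h1); exact: (le_trans xM h2).
pose a : 'rV[R]_d := const_mx (- N); pose b : 'rV[R]_d := const_mx N.
have ab : forall i, a ord0 i <= b ord0 i.
  by move=> i; rewrite !mxE; have := normr_ge0 M; rewrite /N; lra.
have := hleb a b ab.
set B := [set x | _] => hB.
have Bcl : closed (B : set 'rV[R]_d).
  have -> : B = \bigcap_(i in setT) ((fun x : 'rV[R]_d => x ord0 i) @^-1` [set y | - N <= y]
     `&` (fun x : 'rV[R]_d => x ord0 i) @^-1` [set y | y <= N]).
    apply/seteqP; split => x /=.
      by move=> H i _; move: (H i); rewrite !mxE => /andP[].
    by move=> H i; rewrite !mxE; have [] := H i I; move=> -> ->.
  apply: closed_bigI => i _; apply: closedI; apply: preimage_closed;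
    try (by move=> ? ?; apply: coord_continuous); [exact: closed_ge|exact: closed_le].
have mB : measurable (B : set (Borel R d)).
  rewrite -[B]setCK; apply: measurableC; apply: sub_sigma_algebra.
  exact: closed_openC.
apply: (@le_lt_trans _ _ (leb B)).
  apply: le_measure; rewrite ?inE //; first exact: Om_meas.
  by move=> x Ox i; rewrite !mxE; apply: hN.
by rewrite hB ltry.
Qed.

Lemma powp_le (R : realType) (p : R) (y : R) : 0 < p -> p < 1 ->
  `|y| `^ p <= 1 + y ^+ 2.
Proof.
move=> p0 p1.
have [y1|y1] := leP `|y| 1.
  have [y0|y0] := eqVneq `|y| 0.
    rewrite y0 powR0 ?gt_eqF //; have := sqr_ge0 y; lra.
  have h : `|y| `^ p <= `|y| `^ 0.
    apply: ger_powR; [rewrite normr_gt0 -normr_eq0 y0 y1 //| exact: ltW].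
  rewrite powRr0 in h; have := sqr_ge0 y; lra.
have h := @ler1_powR R `|y| p (ltW y1) (ltW p1).
have h2 : `|y| <= y ^+ 2.
  rewrite -real_normK ?num_real //; rewrite expr2; nra.
lra.
Qed.

Section S.
Context (R : realType) (d : nat) (leb : {measure set (Borel R d) -> \bar R})
  (Om : set 'rV[R]_d) (mOm : measurable (Om : set (Borel R d))) (p : R).

Lemma meas_pow (f : 'rV[R]_d -> R) :
  measurable_fun (Om : set (Borel R d)) (f : Borel R d -> R) ->
  measurable_fun (Om : set (Borel R d)) (fun x : Borel R d => (`|f x| `^ p)%:E).
Proof.
move=> mf; apply/measurable_EFinP.
apply: (measurableT_comp (measurable_powR _)).
by apply: measurableT_comp => //; exact: normr_measurable.
Qed.

Lemma J_fin (f : 'rV[R]_d -> R) : 0 < p -> p < 1 ->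
  (leb (Om : set (Borel R d)) < +oo)%E -> L2_on leb Om f ->
  (\int[leb]_(x in (Om : set (Borel R d))) (`|f x| `^ p)%:E < +oo)%E.
Proof.
move=> p0 p1 Ofin [mf f2].
have mf2 : measurable_fun (Om : set (Borel R d)) (fun x : Borel R d => ((f x) ^+ 2)%:E).
  apply/measurable_EFinP; by apply: measurable_funX.
apply: (@le_lt_trans _ _ (\int[leb]_(x in (Om : set (Borel R d))) ((cst 1%:E) x + ((f x) ^+ 2)%:E))%E).
  apply: (ge0_le_integral leb mOm).
  - by move=> x _; rewrite lee_fin powR_ge0.
  - exact: meas_pow.
  - by apply: emeasurable_funD => //; exact: measurable_cst.
  - by move=> x _; rewrite /= -EFinD lee_fin; apply: powp_le.
rewrite (ge0_integralD leb mOm); last 4 first.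
- by move=> x _; rewrite lee_fin.
- exact: measurable_cst.
- by move=> x _; rewrite lee_fin sqr_ge0.
- exact: mf2.
rewrite integral_cst // mul1e.
by apply: lte_add_pinfty.
Qed.

Lemma J_scale (f g : 'rV[R]_d -> R) (t : R) : 0 <= t ->
  measurable_fun (Om : set (Borel R d)) (f : Borel R d -> R) ->
  measurable_fun (Om : set (Borel R d)) (g : Borel R d -> R) ->
  {ae leb, forall x : Borel R d, Om x -> g x = t * f x} ->
  (\int[leb]_(x in (Om : set (Borel R d))) (`|g x| `^ p)%:E
   = (t `^ p)%:E * \int[leb]_(x in (Om : set (Borel R d))) (`|f x| `^ p)%:E)%E.
Proof.
move=> t0 mf mg hae.
rewrite (ae_eq_integral (fun x : Borel R d => (t `^ p)%:E * (`|f x| `^ p)%:E)%E) //.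
- have h0 : forall x : Borel R d, Om x -> (0 <= (`|f x| `^ p)%:E)%E.
    by move=> x _; rewrite lee_fin powR_ge0.
  have := (@ge0_integralZl_EFin _ _ _ leb _ mOm (fun x : Borel R d => (`|f x| `^ p)%:E) h0 (meas_pow f mf) (t `^ p) (powR_ge0 _ _)).
  exact.
- exact: meas_pow.
- apply: emeasurable_funM.
    exact: (measurable_cst (t `^ p)%:E).
  exact: meas_pow.
- apply: filterS hae => x hx Ox; rewrite hx // normrM powRM // ger0_norm //.
Qed.

End S.

Lemma derG (R : realType) (V : normedModType R) (F : V -> R) (ubar : V) (t : R) :
  differentiable F (t *: ubar) ->
  is_derive t 1 (fun s : R => F (s *: ubar)) ('d F (t *: ubar) ubar).
Proof.
move=> dF.
have ds : differentiable ( *:%R ^~ ubar : R -> V) t by [].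
have dG : differentiable (F \o ( *:%R ^~ ubar)) t by apply: differentiable_comp.
change (fun s : R => F (s *: ubar)) with (F \o ( *:%R ^~ ubar)).
apply: DeriveDef; first exact: diff_derivable.
rewrite deriveE // (diff_comp ds dF) /=.
by rewrite diff_val scale1r.
Qed.

Lemma derP (R : realType) (c k b p I : R) (t : R) : 0 < t ->
  is_derive t 1 (fun s : R => c * (s ^+ 2 * k) + b * (s `^ p * I))
     (c * (2 * t * k) + b * (p * t `^ (p - 1) * I)).
Proof.
move=> t0.
have e : (fun s : R => c * (s ^+ 2 * k) + b * (s `^ p * I)) =
   c \*: (((@id R) ^+ 2) * cst k) + b \*: ((@powR R ^~ p) * cst I).
  by apply/funext => s /=.
rewrite e.
have h1 := is_deriveX 2 (@is_derive_id R R t 1).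
have h2 := is_deriveM h1 (is_derive_cst k t 1).
have h3 := is_deriveZ c h2.
have h4 := is_deriveM (@is_derive1_powR R p t t0) (is_derive_cst I t 1).
have h5 := is_deriveZ b h4.
have := is_deriveD h3 h5.
move=> H; apply: (is_derive_eq H).
rewrite /= !scaler0 !add0r [_%:A]mulr1 /cst expr1.
rewrite -!mulrA; congr (_ * _ + _ * _); rewrite /GRing.scale /=; ring.
Qed.

Lemma fermat (R : realType) (V : normedModType R) (F : V -> R) (ubar : V)
  (alpha beta p I rho : R) :
  (forall u, differentiable F u) -> 0 < rho ->
  (forall t : R, 0 < t -> `|t *: ubar - ubar| <= rho ->
     F ubar + alpha / 2 * `|ubar| ^+ 2 + beta * I <=
     F (t *: ubar) + alpha / 2 * `|t *: ubar| ^+ 2 + beta * (t `^ p * I)) ->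
  'd F ubar ubar + alpha * `|ubar| ^+ 2 + beta * (p * I) = 0.
Proof.
move=> dF rho0 hmin.
pose h := fun s : R => F (s *: ubar) + (alpha / 2 * (s ^+ 2 * `|ubar| ^+ 2) + beta * (s `^ p * I)).
have hd : forall s : R, 0 < s -> is_derive s 1 h
   ('d F (s *: ubar) ubar + (alpha / 2 * (2 * s * `|ubar| ^+ 2) + beta * (p * s `^ (p - 1) * I))).
  move=> s s0; apply: is_deriveD; first exact: derG.
  exact: derP.
pose del : R := Num.min (1/2) (rho / (`|ubar| + 1)).
have nu0 : 0 <= `|ubar| by [].
have del0 : 0 < del by rewrite lt_min; apply/andP; split; [lra| apply: divr_gt0 => //; lra].
have del12 : del <= 1/2 by rewrite ge_min lexx.
have delr : del * `|ubar| <= rho.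
  have : del <= rho / (`|ubar| + 1) by rewrite ge_min lexx orbT.
  move=> hd2.
  have hh : rho / (`|ubar| + 1) * `|ubar| <= rho.
    rewrite mulrAC ler_pdivrMr; last lra.
    nra.
  apply: le_trans hh; exact: ler_wpM2r.
have H0 : is_derive (1 : R) (1 : R) h 0.
  apply: (@derive1_at_min R h (1 - del) (1 + del) 1).
  - lra.
  - move=> t; rewrite in_itv /= => /andP[t1 t2].
    have /hd [] // : 0 < t by lra.
  - rewrite in_itv /=; apply/andP; split; lra.
  - move=> t; rewrite in_itv /= => /andP[t1 t2].
    have t0 : 0 < t by lra.
    have := hmin t t0.
    rewrite /h scale1r expr1n mul1r powR1 mul1r.
    have -> : `|t *: ubar| ^+ 2 = t ^+ 2 * `|ubar| ^+ 2.
      by rewrite normrZ gtr0_norm // exprMn.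
    move=> H; rewrite !addrA; apply: H.
    rewrite -{2}(scale1r ubar) -scalerBl normrZ.
    apply: le_trans delr; apply: ler_wpM2r => //.
    rewrite ler_norml; apply/andP; split; lra.
have E0 : 'D_1 h 1 = 0 by apply: derive_val.
have E1 := hd 1 ltr01.
have E2 : 'D_1 h 1 = 'd F (1 *: ubar) ubar + (alpha / 2 * (2 * 1 * `|ubar| ^+ 2) + beta * (p * 1 `^ (p - 1) * I)) by apply: derive_val.
rewrite E0 scale1r powR1 in E2.
rewrite E2 /=; field; lra.
Qed.

Lemma ip_dual (R : realType) (V : normedModType R) (ip : V -> V -> R) (u : V) :
  inner_product_of ip -> 
  (forall (a : R) (v w : V), ip u (a *: v + w) = a * ip u v + ip u w) /\
  continuous (ip u).
Proof.
case=> hl hs hn.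
have lin : forall (a : R) (v w : V), ip u (a *: v + w) = a * ip u v + ip u w.
  by move=> a v w; rewrite hs hl (hs v) (hs w).
split => //.
have pol : forall v, ip u v = (`|u + v| ^+ 2 - `|u| ^+ 2 - `|v| ^+ 2) / 2.
  move=> v; rewrite -!hn.
  have e1 : ip (u + v) (u + v) = ip u (u + v) + ip v (u + v).
    by have := hl 1 u v (u + v); rewrite scale1r mul1r.
  have e2 : ip u (u + v) = ip u u + ip u v.
    by have := lin 1 u v; rewrite scale1r mul1r.
  have e3 : ip v (u + v) = ip v u + ip v v.
    by rewrite (hs v (u + v)); have := hl 1 u v v; rewrite scale1r mul1r => ->; rewrite (hs u v).
  by rewrite e1 e2 e3 (hs v u); field.
have -> : ip u = (fun v => (`|u + v| ^+ 2 - `|u| ^+ 2 - `|v| ^+ 2) / 2).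
  by apply/funext => v; exact: pol.
move=> x.
apply: cvgM; last exact: cvg_cst.
apply: cvgB; last by rewrite expr2; apply: cvgM; apply: cvg_norm; exact: cvg_id.
apply: cvgB; last exact: cvg_cst.
rewrite expr2; apply: cvgM; apply: cvg_norm; apply: cvgD; try exact: cvg_cst; try exact: cvg_id.
Qed.

Theorem theorem5p6
  (R : realType) (d : nat) (hd : (0 < d)%N)
  (leb : {measure set (Borel R d) -> \bar R}) (hleb : is_lebesgue_measure leb)
  (Om : set 'rV[R]_d) (hOm : bounded_lipschitz_domain Om)
  (V : completeNormedModType R) (ip : V -> V -> R) (hip : inner_product_of ip)
  (iota : V -> 'rV[R]_d -> R)
  (iota_lin : forall (a : R) (u v : V),
     {ae leb, forall x : Borel R d, Om x ->
        iota (a *: u + v) x = a * iota u x + iota v x})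
  (iota_L2 : forall u : V, L2_on leb Om (iota u))
  (iota_inj : forall u : V,
     {ae leb, forall x : Borel R d, Om x -> iota u x = 0} -> u = 0)
  (iota_cont : exists C : R, forall u : V,
     (L2_dist2 leb Om (iota u) (fun=> 0%R) <= (C * `|u| ^+ 2)%:E)%E)
  (iota_compact : forall u_ : nat -> V, (exists M : R, forall n, `|u_ n| <= M) ->
     exists (phi : nat -> nat) (f : 'rV[R]_d -> R),
       [/\ forall n, (phi n < phi n.+1)%N, L2_on leb Om f &
           (fun n => L2_dist2 leb Om (iota (u_ (phi n))) f) @ \oo --> 0%E])
  (iota_dense : forall f : 'rV[R]_d -> R, L2_on leb Om f ->
     forall eps : R, 0 < eps -> exists u : V, (L2_dist2 leb Om (iota u) f < eps%:E)%E)
  (F : V -> R) (hF_wlsc : weakly_lsc F)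
  (hF_below : exists (g : V -> R) (c : R), in_dual g /\ forall u, g u + c <= F u)
  (hF_C1 : C1_frechet F)
  (alpha beta p : R) (halpha : 0 < alpha) (hbeta : 0 < beta) (hp0 : 0 < p) (hp1 : p < 1)
  (ubar : V)
  (hloc : exists2 rho : R, 0 < rho & forall u : V, `|u - ubar| <= rho ->
     ((F ubar + alpha / 2 * `|ubar| ^+ 2)%:E
        + beta%:E * \int[leb]_(x in (Om : set (Borel R d))) (`|iota ubar x| `^ p)%:E
      <= (F u + alpha / 2 * `|u| ^+ 2)%:E
        + beta%:E * \int[leb]_(x in (Om : set (Borel R d))) (`|iota u x| `^ p)%:E)%E) :
  exists lambda : V -> R,
    [/\ in_dual lambda,
        forall v : V, alpha * ip ubar v + beta * lambda v = - ('d F ubar v) &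
        ((lambda ubar)%:E
           = p%:E * \int[leb]_(x in (Om : set (Borel R d))) (`|iota ubar x| `^ p)%:E)%E].
Proof.
have mOm : measurable (Om : set (Borel R d)) by case: hOm => oOm _ _; exact: Om_meas.
have Ofin := @Om_fin R d leb hleb Om hOm.
have hscale : forall t : R,
    {ae leb, forall x : Borel R d, Om x -> iota (t *: ubar) x = t * iota ubar x}.
  move=> t; have h0 := iota_lin 1 0 0; have h1 := iota_lin t ubar 0.
  apply: filterS2 h0 h1 => x h0 h1 Ox.
  have := h0 Ox; rewrite scale1r addr0 mul1r => e0.
  have z : iota 0 x = 0 by lra.
  by have := h1 Ox; rewrite addr0 z addr0.
pose J := (\int[leb]_(x in (Om : set (Borel R d))) (`|iota ubar x| `^ p)%:E)%E.
have J0 : (0 <= J)%E by apply: integral_ge0 => x _; rewrite lee_fin powR_ge0.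
have Jfin : (J < +oo)%E by apply: J_fin => //.
pose I := fine J.
have JI : J = I%:E by rewrite /I fineK // ge0_fin_numE.
have Jt : forall t : R, 0 <= t ->
    (\int[leb]_(x in (Om : set (Borel R d))) (`|iota (t *: ubar) x| `^ p)%:E)%E
    = (t `^ p * I)%:E.
  move=> t t0; rewrite (@J_scale R d leb Om mOm p (iota ubar) (iota (t *: ubar)) t t0 (iota_L2 ubar).1 (iota_L2 (t *: ubar)).1 (hscale t)).
  by rewrite -/J JI -EFinM.
case: hloc => rho rho0 hrho.
have key := @fermat R V F ubar alpha beta p I rho hF_C1.1 rho0.
have key' : 'd F ubar ubar + alpha * `|ubar| ^+ 2 + beta * (p * I) = 0.
  apply: key => t t0 ht.
  have := hrho _ ht.
  rewrite -/J JI Jt; last exact: ltW.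
  by rewrite -!EFinM -!EFinD lee_fin.
have [ipl ipc] := @ip_dual R V ip ubar hip.
have dFc : continuous ('d F ubar) by apply: diff_continuous; exact: hF_C1.1.
exists (fun v => - ('d F ubar v + alpha * ip ubar v) / beta).
split.
- split.
    move=> a u v.
    have eD : 'd F ubar (a *: u + v) = a * 'd F ubar u + 'd F ubar v.
      by rewrite linearD linearZ.
    rewrite eD ipl; field.
    by rewrite gt_eqF.
  move=> x; apply: cvgM; last exact: cvg_cst.
  apply: cvgN; apply: cvgD; first exact: dFc.
  by apply: cvgM; [exact: cvg_cst| exact: ipc].
- by move=> v; field; rewrite gt_eqF.
- rewrite -/J JI -EFinM; congr (_%:E).
  have -> : ip ubar ubar = `|ubar| ^+ 2 by case: hip.
  have e : 'd F ubar ubar + alpha * `|ubar| ^+ 2 = - (beta * (p * I)) by lra.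
  by rewrite e opprK; field; rewrite gt_eqF.
Qed.
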